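(* If a complete theory $T$ is convexly orderable, then $T$ is dp-small.
   Context: Let $T$ be a complete theory in a language $L$ with monster model $\mathcal{U}$; $\mathcal{U}_y$ denotes the $|y|$-tuples from $\mathcal{U}$, and $x$ denotes a single variable. An $L$-structure $M$ is convexly orderable if there is a linear order $\lhd$ on $M$ (not necessarily definable) such that for every $L$-formula $\varphi(x;y)$ there is $K_\varphi<\omega$ with $\varphi(M;b)$ a union of at most $K_\varphi$ $\lhd$-convex subsets of $M$ for every $b\in M_y$; $T$ is convexly orderable if some (equivalently every) model of $T$ is. A partial type $\pi(x)$ is dp-small if there do not exist $L(\mathcal{U})$-formulas $\varphi_i(x)$ ($i<\omega$), an $L$-formula $\psi(x;y)$ and $b_j\in\mathcal{U}_y$ ($j<\omega$) such that for all $i_0,j_0<\omega$ the type $\pi(x)\cup\{\varphi_{i_0}(x),\psi(x;b_{j_0})\}\cup\{\neg\varphi_i(x): i\ne i_0\}\cup\{\neg\psi(x;b_j): j\neq j_0\}$ is consistent. $T$ is dp-small if $x=x$ is dp-small. *)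

(* Defs.v *)
From mathcomp Require Import all_boot.
Unset Printing Implicit Defensive.

Record language := Language {
  func : Type; rel : Type;
  farity : func -> nat; rarity : rel -> nat }.
Arguments farity {_}. Arguments rarity {_}.

Inductive term (L : language) : Type :=
| tvar : nat -> term L
| tfun : forall f : func L, ('I_(farity f) -> term L) -> term L.

Inductive formula (L : language) : Type :=
| fbot : formula L
| feq : term L -> term L -> formula L
| frel : forall r : rel L, ('I_(rarity r) -> term L) -> formula L
| fneg : formula L -> formula L
| fand : formula L -> formula L -> formula L
| fex : nat -> formula L -> formula L.

Arguments tvar {L}. Arguments fbot {L}. Arguments tfun {L}. Arguments feq {L}.
Arguments frel {L}. Arguments fneg {L}. Arguments fand {L}. Arguments fex {L}.

Record structure (L : language) := Structure {
  dom :> Type;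
  dom_inhabitant : dom;
  finterp : forall f : func L, ('I_(farity f) -> dom) -> dom;
  rinterp : forall r : rel L, ('I_(rarity r) -> dom) -> Prop }.

Definition upd {A : Type} (s : nat -> A) (n : nat) (a : A) : nat -> A :=
  fun m => if m == n then a else s m.

Fixpoint eval (L : language) (M : structure L) (s : nat -> M) (t : term L) : M :=
  match t with
  | tvar n => s n
  | tfun f args => finterp L M f (fun i => eval L M s (args i))
  end.

Arguments eval {L}.
Fixpoint sat (L : language) (M : structure L) (s : nat -> M) (phi : formula L) : Prop :=
  match phi with
  | fbot => False
  | feq t u => eval M s t = eval M s u
  | frel r args => rinterp L M r (fun i => eval M s (args i))
  | fneg p => ~ sat L M s p
  | fand p q => sat L M s p /\ sat L M s q
  | fex n p => exists a : M, sat L M (upd s n a) p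
  end.

Arguments sat {L}.
Fixpoint occurs (L : language) (n : nat) (t : term L) : Prop :=
  match t with
  | tvar m => m = n
  | tfun f args => exists i, occurs L n (args i)
  end.

Arguments occurs {L}.
Fixpoint free_in (L : language) (n : nat) (phi : formula L) : Prop :=
  match phi with
  | fbot => False
  | feq t u => occurs n t \/ occurs n u
  | frel r args => exists i, occurs n (args i)
  | fneg p => free_in L n p
  | fand p q => free_in L n p \/ free_in L n q
  | fex m p => m <> n /\ free_in L n p
  end.

Arguments free_in {L}.
Definition sentence (L : language) (phi : formula L) : Prop :=
  forall n, ~ free_in n phi.

Arguments sentence {L}.
Definition theory (L : language) := formula L -> Prop.

Definition is_model (L : language) (T : theory L) (M : structure L) : Prop :=
  forall phi, T phi -> forall s : nat -> M, sat M s phi.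

Arguments is_model {L}.
Definition complete_theory (L : language) (T : theory L) : Prop :=
  (forall phi, T phi -> sentence phi) /\
  (exists M : structure L, is_model T M) /\
  (forall phi, sentence phi ->
     (forall M : structure L, is_model T M -> forall s : nat -> M, sat M s phi) \/
     (forall M : structure L, is_model T M -> forall s : nat -> M, sat M s (fneg phi))).

Arguments complete_theory {L}.
Definition elementary (L : language) (M N : structure L) (e : M -> N) : Prop :=
  forall (phi : formula L) (s : nat -> M), sat M s phi <-> sat N (fun n => e (s n)) phi.

Arguments elementary {L}.
(** * Convex orderability.  The distinguished single variable x is variable 0;
    a formula phi(x;y) is any formula, the parameters b being the values of an
    assignment on the other variables. *)
Definition linear_order {A : Type} (le : A -> A -> Prop) : Prop :=
  (forall a, le a a) /\ (forall a b, le a b -> le b a -> a = b) /\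
  (forall a b c, le a b -> le b c -> le a c) /\ (forall a b, le a b \/ le b a).

Definition convex {A : Type} (le : A -> A -> Prop) (C : A -> Prop) : Prop :=
  forall a b c, C a -> C c -> le a b -> le b c -> C b.

Definition defset (L : language) (M : structure L) (phi : formula L) (s : nat -> M) :
  M -> Prop := fun a => sat M (upd s 0 a) phi.

Arguments defset {L}.
Definition convexly_orderable_structure (L : language) (M : structure L) : Prop :=
  exists le : M -> M -> Prop, linear_order le /\
    forall phi : formula L, exists K : nat, forall s : nat -> M,
      exists C : 'I_K -> M -> Prop, (forall k, convex le (C k)) /\
        (forall a, defset M phi s a <-> exists k, C k a).

Arguments convexly_orderable_structure {L}.
Definition convexly_orderable (L : language) (T : theory L) : Prop :=
  exists M : structure L, is_model T M /\ convexly_orderable_structure M.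

Arguments convexly_orderable {L}.
(** A formula with parameters from M is a pair (phi, c) of a formula and an
    assignment c giving the parameter values of the variables other than 0.
    A set of such formulas in x is consistent (with the elementary diagram of M)
    iff it is realized in some elementary extension of M. *)
Definition consistent_over (L : language) (M : structure L)
  (Sigma : formula L -> (nat -> M) -> Prop) : Prop :=
  exists (N : structure L) (e : M -> N), elementary M N e /\
    exists a : N, forall phi c, Sigma phi c -> sat N (upd (fun n => e (c n)) 0 a) phi.

Arguments consistent_over {L}.
Definition ict_type (L : language) (M : structure L)
  (phi : nat -> formula L) (c : nat -> nat -> M) (psi : formula L) (b : nat -> nat -> M)
  (i0 j0 : nat) : formula L -> (nat -> M) -> Prop :=
  fun chi d =>
    (chi = feq (tvar 0) (tvar 0) /\ d = c i0) \/
    (chi = phi i0 /\ d = c i0) \/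
    (chi = psi /\ d = b j0) \/
    (exists i, i <> i0 /\ chi = fneg (phi i) /\ d = c i) \/
    (exists j, j <> j0 /\ chi = fneg psi /\ d = b j).

Arguments ict_type {L}.
(** T is dp-small: in no model of T (in particular not in the monster model,
    and any model embeds elementarily into it) is there such a configuration. *)
Definition dp_small (L : language) (T : theory L) : Prop :=
  forall M : structure L, is_model T M ->
    ~ exists (phi : nat -> formula L) (c : nat -> nat -> M)
             (psi : formula L) (b : nat -> nat -> M),
        forall i0 j0 : nat, consistent_over M (ict_type M phi c psi b i0 j0).
Arguments dp_small {L}.

(* Main.v *)
From mathcomp Require Import all_boot.
Require Import Defs.
From Stdlib Require Import FunctionalExtensionality ClassicalEpsilon.

Section Syn.
Variable L : language.

Fixpoint rent (r : nat -> nat) (t : term L) : term L :=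
  match t with tvar v => tvar (r v) | tfun f a => tfun f (fun k => rent r (a k)) end.
Fixpoint renf (r : nat -> nat) (p : formula L) : formula L :=
  match p with
  | fbot => fbot
  | feq t u => feq (rent r t) (rent r u)
  | frel R a => frel R (fun k => rent r (a k))
  | fneg p => fneg (renf r p)
  | fand p q => fand (renf r p) (renf r q)
  | fex n p => fex (r n) (renf r p)
  end.

Lemma eval_ren (M : structure L) s r t :
  eval M s (rent r t) = eval M (fun v => s (r v)) t.
Proof.
elim: t => [v|f a IH] //=.
congr (finterp L M f _); apply: functional_extensionality => k; exact: IH.
Qed.

Lemma sat_ren (M : structure L) r (rinj : injective r) p : forall s,
  sat M s (renf r p) <-> sat M (fun v => s (r v)) p.
Proof.
elim: p => [|t u|R a|p IH|p IHp q IHq|n p IH] s /=.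
- by [].
- by rewrite !eval_ren.
- have -> : (fun i => eval M s (rent r (a i))) = (fun i => eval M (fun v => s (r v)) (a i)).
    by apply: functional_extensionality => k; rewrite eval_ren.
  by [].
- by split => H1 H2; apply: H1; apply/IH.
- by split => -[H1 H2]; split; apply/IHp || apply/IHq.
- have E : forall a, (fun v => upd s (r n) a (r v)) = upd (fun v => s (r v)) n a.
    by move=> a; apply: functional_extensionality => v; rewrite /upd (inj_eq rinj).
  by split => -[a Ha]; exists a; [rewrite -E; apply/IH | apply/IH; rewrite E].
Qed.

Lemma eval_ext (M : structure L) t s s' :
  (forall v, occurs v t -> s v = s' v) -> eval M s t = eval M s' t.
Proof.
elim: t => [v|f a IH] /= H; first by apply: H.
congr (finterp L M f _); apply: functional_extensionality => k; apply: IH => v hv.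
by apply: H; exists k.
Qed.

Lemma sat_ext (M : structure L) p : forall s s',
  (forall v, free_in v p -> s v = s' v) -> (sat M s p <-> sat M s' p).
Proof.
elim: p => [|t u|R a|p IH|p IHp q IHq|n p IH] s s' /= H.
- by [].
- by rewrite (eval_ext M t s s') ?(eval_ext M u s s') // => v hv; apply: H; [right|left].
- have -> : (fun i => eval M s (a i)) = (fun i => eval M s' (a i)).
    apply: functional_extensionality => k; apply: eval_ext => v hv; apply: H; by exists k.
  by [].
- by split => H1 H2; apply: H1; apply/(IH s s' H).
- by split => -[H1 H2]; split; (apply/(IHp s s') || apply/(IHq s s')) => // v hv; apply: H; tauto.
- have E : forall a v, free_in v p -> upd s n a v = upd s' n a v.
    move=> a v hv; rewrite /upd; case: eqP => // /eqP nv; apply: H; split => //.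
    by move=> e; rewrite e eqxx in nv.
  split => -[a Ha]; exists a.
  + by apply/(IH (upd s n a)); first by move=> v hv; apply: E.
  + by apply/(IH _ (upd s' n a)); first by move=> v hv; apply: E.
Qed.

Lemma occ_bound (t : term L) : exists V, forall n, occurs n t -> n < V.
Proof.
elim: t => [v|f a IH]; first by exists v.+1 => n /= ->.
pose Vf i := proj1_sig (constructive_indefinite_description _ (IH i)).
exists (\max_(i < farity f) Vf i) => n /= [i hi].
apply: leq_trans (leq_bigmax i).
exact: (proj2_sig (constructive_indefinite_description _ (IH i))).
Qed.

Lemma free_bound (p : formula L) : exists V, forall n, free_in n p -> n < V.
Proof.
elim: p => [|t u|R a|p IH|p IHp q IHq|m p IH].
- by exists 0.
- have [V1 h1] := occ_bound t; have [V2 h2] := occ_bound u.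
  exists (maxn V1 V2) => n /= [/h1|/h2] h; rewrite leq_max h ?orbT //.
- pose Vf i := proj1_sig (constructive_indefinite_description _ (occ_bound (a i))).
  exists (\max_(i < rarity R) Vf i) => n /= [i hi].
  apply: leq_trans (leq_bigmax i).
  exact: (proj2_sig (constructive_indefinite_description _ (occ_bound (a i)))).
- by [].
- have [V1 h1] := IHp; have [V2 h2] := IHq.
  exists (maxn V1 V2) => n /= [/h1|/h2] h; rewrite leq_max h ?orbT //.
- have [V h] := IH; exists V => n /= [_ /h] //.
Qed.

Fixpoint exs (k : nat) (p : formula L) : formula L :=
  match k with 0 => p | k'.+1 => fex k' (exs k' p) end.

Lemma sat_exs (M : structure L) p k : forall s,
  sat M s (exs k p) <-> exists t, (forall v, k <= v -> t v = s v) /\ sat M t p.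
Proof.
elim: k => [|k IH] s /=.
- split; [by move=> h; exists s | by move=> [t [ht h]]; have -> : s = t by apply: functional_extensionality => v; rewrite ht].
- split.
  + move=> [a /IH [t [ht h]]]; exists t; split => // v hv; rewrite ht ?(ltnW hv) // /upd.
    by case: eqP => // e; rewrite e ltnn in hv.
  + move=> [t [ht h]]; exists (t k); apply/IH; exists t; split => // v hv; rewrite /upd.
    case: eqP => [->|/eqP ne] //; apply: ht; by rewrite ltn_neqAle eq_sym ne hv.
Qed.

Lemma free_exs (p : formula L) k n : free_in n (exs k p) -> k <= n /\ free_in n p.
Proof.
elim: k => [|k IH] //= [ne /IH [h1 h2]]; split => //.
by rewrite ltn_neqAle h1 andbT; apply/eqP.
Qed.

Definition ftrue : formula L := fneg fbot.
Fixpoint conjn (k : nat) (F : nat -> formula L) : formula L :=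
  match k with 0 => ftrue | k'.+1 => fand (conjn k' F) (F k') end.

Lemma sat_conjn (M : structure L) s k F :
  sat M s (conjn k F) <-> forall i, i < k -> sat M s (F i).
Proof.
elim: k => [|k IH] /=; first by split => // _ i.
split.
- move=> [/IH h1 h2] i; rewrite ltnS leq_eqVlt => /orP [/eqP ->|hi] //; exact: h1.
- by move=> h; split; [apply/IH => i hi; apply: h; apply: ltnW | apply: h].
Qed.

End Syn.

Lemma choice_fun (A B : Type) (P : A -> B -> Prop) :
  (forall a, exists b, P a b) -> exists f : A -> B, forall a, P a (f a).
Proof.
move=> H; exists (fun a => proj1_sig (constructive_indefinite_description _ (H a))).
move=> a; exact: (proj2_sig (constructive_indefinite_description _ (H a))).
Qed.

Arguments choice_fun {A B P}.

Lemma pigeon (T T' : finType) (f : T -> T') : #|T'| < #|T| ->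
  exists a b, a != b /\ f a = f b.
Proof.
move=> lt.
have : ~~ injectiveb f.
  apply/negP => /injectiveP inj; have := leq_card f inj; by rewrite leqNgt lt.
by move/injectivePn => [a [b ne e]]; exists a, b.
Qed.

Arguments pigeon {T T'}.

Definition btw {A} (le : A -> A -> Prop) a b z := (le a z /\ le z b) \/ (le b z /\ le z a).

Lemma four A (le : A -> A -> Prop) (lin : linear_order le) x x' y y' :
 ~ btw le x x' y -> ~ btw le x x' y' -> ~ btw le y y' x -> ~ btw le y y' x' ->
 ~ btw le x y x' -> ~ btw le x y y' -> ~ btw le x' y' x -> ~ btw le x' y' y -> False.
Proof.
case: lin => refl [_ [tr tot]]; rewrite /btw => h1 h2 h3 h4 h5 h6 h7 h8.
case: (tot x x') => a1; case: (tot x y) => a2; case: (tot x y') => a3;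
case: (tot x' y) => a4; case: (tot x' y') => a5; case: (tot y y') => a6;
 first [ solve [intuition] | solve [ firstorder eauto ] ].
Qed.

Lemma convex_btw A (le : A -> A -> Prop) C a b z :
  convex le C -> C a -> C b -> btw le a b z -> C z.
Proof. by move=> cv ha hb [[h1 h2]|[h1 h2]]; [apply: (cv a z b) | apply: (cv b z a)]. Qed.

Arguments convex_btw {A le C a b z}.

Definition pattern_at (L : language) (M0 : structure L) (phi : nat -> formula L)
  (psi : formula L) (n m : nat) (pa pb : nat -> nat -> M0) (x : M0) (i0 j0 : nat) : Prop :=
  (forall i, i < n -> (i = i0 -> defset M0 (phi i) (pa i) x) /\
                      (i <> i0 -> ~ defset M0 (phi i) (pa i) x)) /\
  (forall j, j < m -> (j = j0 -> defset M0 psi (pb j) x) /\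
                      (j <> j0 -> ~ defset M0 psi (pb j) x)).
Arguments pattern_at {L}.

Lemma combi (L : language) (M0 : structure L) (le : M0 -> M0 -> Prop)
  (lin : linear_order le) (phi : nat -> formula L) (psi : formula L) (Kp : nat)
  (Cp : (nat -> M0) -> 'I_Kp -> M0 -> Prop)
  (hp : forall s, (forall k, convex le (Cp s k)) /\
                  (forall a, defset M0 psi s a <-> exists k, Cp s k a))
  (Kf : nat -> nat) (Cf : forall i, (nat -> M0) -> 'I_(Kf i) -> M0 -> Prop)
  (hf : forall i s, (forall k, convex le (Cf i s k)) /\
                  (forall a, defset M0 (phi i) s a <-> exists k, Cf i s k a))
  (pa pb : nat -> nat -> M0) (x : nat -> nat -> M0) :
  (forall i0 j0, i0 < Kp.+1 -> j0 < (Kp.+1 * Kp.+1 * (\max_(i < Kp.+1) Kf i) * (\max_(i < Kp.+1) Kf i)).+1 ->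
     pattern_at M0 phi psi Kp.+1 (Kp.+1 * Kp.+1 * (\max_(i < Kp.+1) Kf i) * (\max_(i < Kp.+1) Kf i)).+1
        pa pb (x i0 j0) i0 j0) -> False.
Proof.
set n := Kp.+1; set K' := \max_(i < n) Kf i; set m := (n * n * K' * K').+1 => H.
have S1 : forall j : 'I_m, exists i12 : 'I_n * 'I_n, i12.1 != i12.2 /\
    exists k, Cp (pb j) k (x i12.1 j) /\ Cp (pb j) k (x i12.2 j).
  move=> j.
  have g : forall i : 'I_n, exists k, Cp (pb j) k (x i j).
    move=> i; apply/(proj2 (hp (pb j))).
    exact: (proj1 ((proj2 (H i j (ltn_ord i) (ltn_ord j))) j (ltn_ord j)) erefl).
  have [gf hg] := choice_fun g.
  have lt1 : #|'I_Kp| < #|'I_n| by rewrite !card_ord.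
  have [a [b [ne e]]] := pigeon gf lt1.
  exists (a, b); split => //; exists (gf a); split => //; rewrite e; exact: hg.
have [R hR] := choice_fun S1.
pose inpiece (i : nat) (k : nat) (z : M0) := exists h : k < Kf i, Cf i (pa i) (Ordinal h) z.
have S3 : forall (j : 'I_m), exists k12 : 'I_K' * 'I_K',
    inpiece (R j).1 k12.1 (x (R j).1 j) /\ inpiece (R j).2 k12.2 (x (R j).2 j).
  move=> j.
  have P : forall i : 'I_n, exists k : 'I_K', inpiece i k (x i j).
    move=> i.
    have /(proj2 (hf i (pa i))) [k hk] :=
      (proj1 ((proj1 (H i j (ltn_ord i) (ltn_ord j))) i (ltn_ord i)) erefl).
    have hkK : k < K' by apply: leq_trans (ltn_ord k) (leq_bigmax i).
    exists (Ordinal hkK); exists (ltn_ord k) => /=.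
    by have -> : Ordinal (ltn_ord k) = k by apply: val_inj.
  have [k1 h1] := P (R j).1; have [k2 h2] := P (R j).2.
  by exists (k1, k2).
have [Kc hK] := choice_fun S3.
have lt2 : #|{: ('I_n * 'I_n) * ('I_K' * 'I_K')}| < #|'I_m|.
  by rewrite !card_prod !card_ord /m ltnS -!mulnA.
have [s [t [nst e]]] := pigeon (fun j => (R j, Kc j)) lt2.
case: e => eR eK.
have Hs := hR s; have Ht := hR t; have Ks := hK s; have Kt := hK t.
rewrite eR in Hs Ks; rewrite eK in Ks.
move: Hs Ht Ks Kt.
case: (R t) => i i' /=; case: (Kc t) => k k' /=.
move=> [nii [kp [hs1 hs2]]] [_ [kq [ht1 ht2]]] [ps1 ps2] [pt1 pt2].
have samephi : forall i k a b z, inpiece i k a -> inpiece i k b -> btw le a b z ->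
    defset M0 (phi i) (pa i) z.
  move=> i0 k0 a b z [h1 ha] [h2 hb] hz.
  have e12 : h2 = h1 by apply: eq_irrelevance.
  rewrite e12 in hb.
  apply/(proj2 (hf i0 (pa i0))); exists (Ordinal h1).
  exact: (convex_btw (proj1 (hf i0 (pa i0)) _) ha hb hz).
have samepsi : forall j k a b z, Cp (pb j) k a -> Cp (pb j) k b -> btw le a b z ->
    defset M0 psi (pb j) z.
  move=> j0 k0 a b z ha hb hz; apply/(proj2 (hp (pb j0))); exists k0.
  exact: (convex_btw (proj1 (hp (pb j0)) _) ha hb hz).
have nst' : (s : nat) <> t by move=> e; move/eqP: nst; apply; apply: val_inj.
have nii' : (i : nat) <> i' by move=> e; move/eqP: nii; apply; apply: val_inj.
have nst'' : (t : nat) <> s by move/esym.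
have nii'' : (i' : nat) <> i by move/esym.
have PA := fun (i0 : 'I_n) (j0 : 'I_m) => H i0 j0 (ltn_ord i0) (ltn_ord j0).
apply: (four _ _ lin (x i s) (x i' s) (x i t) (x i' t)).
- move=> /(samepsi _ _ _ _ _ hs1 hs2); apply: (proj2 ((proj2 (PA i t)) s (ltn_ord s))) => //.
- move=> /(samepsi _ _ _ _ _ hs1 hs2); apply: (proj2 ((proj2 (PA i' t)) s (ltn_ord s))) => //.
- move=> /(samepsi _ _ _ _ _ ht1 ht2); apply: (proj2 ((proj2 (PA i s)) t (ltn_ord t))) => //.
- move=> /(samepsi _ _ _ _ _ ht1 ht2); apply: (proj2 ((proj2 (PA i' s)) t (ltn_ord t))) => //.
- move=> /(samephi _ _ _ _ _ ps1 pt1); apply: (proj2 ((proj1 (PA i' s)) i (ltn_ord i))) => //.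
- move=> /(samephi _ _ _ _ _ ps1 pt1); apply: (proj2 ((proj1 (PA i' t)) i (ltn_ord i))) => //.
- move=> /(samephi _ _ _ _ _ ps2 pt2); apply: (proj2 ((proj1 (PA i s)) i' (ltn_ord i'))) => //.
- move=> /(samephi _ _ _ _ _ ps2 pt2); apply: (proj2 ((proj1 (PA i t)) i' (ltn_ord i'))) => //.
Qed.

Lemma pickle_inj (T : countType) : injective (@pickle T).
Proof. exact: pcan_inj pickleK_inv. Qed.
Arguments pickle_inj {T}.

Definition VT := ((nat * nat) + ((nat * nat) + (nat * nat)))%type.
Definition Xc (i j : nat) : nat := pickle (inl (i, j) : VT).
Definition Pc (i v : nat) : nat := pickle (inr (inl (i, v)) : VT).
Definition Qc (j v : nat) : nat := pickle (inr (inr (j, v)) : VT).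
Definition rphi i i0 j0 (v : nat) := if v == 0 then Xc i0 j0 else Pc i v.
Definition rpsi j i0 j0 (v : nat) := if v == 0 then Xc i0 j0 else Qc j v.

Lemma rphi_inj i i0 j0 : injective (rphi i i0 j0).
Proof.
move=> u v; rewrite /rphi /Xc /Pc.
case: eqP => [->|_]; case: eqP => [->|_] // /pickle_inj; by case.
Qed.
Lemma rpsi_inj i i0 j0 : injective (rpsi i i0 j0).
Proof.
move=> u v; rewrite /rpsi /Xc /Qc.
case: eqP => [->|_]; case: eqP => [->|_] // /pickle_inj; by case.
Qed.

Definition Loc (L : language) (phi : nat -> formula L) (psi : formula L) (n m i0 j0 : nat) :=
  fand (conjn L n (fun i => if i == i0 then renf L (rphi i i0 j0) (phi i)
                            else fneg (renf L (rphi i i0 j0) (phi i))))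
       (conjn L m (fun j => if j == j0 then renf L (rpsi j i0 j0) psi
                            else fneg (renf L (rpsi j i0 j0) psi))).

Lemma sat_Loc (L : language) (X : structure L) phi psi n m i0 j0 s :
  sat X s (Loc L phi psi n m i0 j0) <->
  pattern_at X phi psi n m (fun i v => s (Pc i v)) (fun j v => s (Qc j v)) (s (Xc i0 j0)) i0 j0.
Proof.
have E1 : forall i, (fun v => s (rphi i i0 j0 v)) = upd (fun v => s (Pc i v)) 0 (s (Xc i0 j0)).
  by move=> i; apply: functional_extensionality => v; rewrite /rphi /upd; case: eqP.
have E2 : forall j, (fun v => s (rpsi j i0 j0 v)) = upd (fun v => s (Qc j v)) 0 (s (Xc i0 j0)).
  by move=> j; apply: functional_extensionality => v; rewrite /rpsi /upd; case: eqP.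
rewrite /Loc /pattern_at /defset /=; rewrite !sat_conjn.
split.
- move=> [h1 h2]; split.
  + move=> i hi; have := h1 i hi; case: eqP => [->|ne].
    * by move/(sat_ren _ _ _ (rphi_inj _ _ _)); rewrite E1.
    * move=> /= h; split => // _ h'; apply: h; apply/(sat_ren _ _ _ (rphi_inj _ _ _)); by rewrite E1.
  + move=> j hj; have := h2 j hj; case: eqP => [->|ne].
    * by move/(sat_ren _ _ _ (rpsi_inj _ _ _)); rewrite E2.
    * move=> /= h; split => // _ h'; apply: h; apply/(sat_ren _ _ _ (rpsi_inj _ _ _)); by rewrite E2.
- move=> [h1 h2]; split.
  + move=> i hi; have := h1 i hi; case: eqP => [->|ne] [ha hb].
    * by apply/(sat_ren _ _ _ (rphi_inj _ _ _)); rewrite E1; apply: ha.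
    * move=> /= h; apply: (hb ne); move/(sat_ren _ _ _ (rphi_inj _ _ _)): h; by rewrite E1.
  + move=> j hj; have := h2 j hj; case: eqP => [->|ne] [ha hb].
    * by apply/(sat_ren _ _ _ (rpsi_inj _ _ _)); rewrite E2; apply: ha.
    * move=> /= h; apply: (hb ne); move/(sat_ren _ _ _ (rpsi_inj _ _ _)): h; by rewrite E2.
Qed.

Definition asg (D : Type) (d : D) (A : nat -> nat -> D) (c b : nat -> nat -> D) (w : nat) : D :=
  match pickle_inv w : option VT with
  | Some (inl (i, j)) => A i j
  | Some (inr (inl (i, v))) => c i v
  | Some (inr (inr (j, v))) => b j v
  | None => d
  end.

Lemma asgX D d A c b i j : asg D d A c b (Xc i j) = A i j.
Proof. by rewrite /asg /Xc pickleK_inv. Qed.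
Lemma asgP D d A c b i v : asg D d A c b (Pc i v) = c i v.
Proof. by rewrite /asg /Pc pickleK_inv. Qed.
Lemma asgQ D d A c b i v : asg D d A c b (Qc i v) = b i v.
Proof. by rewrite /asg /Qc pickleK_inv. Qed.

Theorem proposition1p5 (L : language) (T : theory L) :
  complete_theory T -> convexly_orderable T -> dp_small T.
Proof.
move=> [_ [_ HT]] [M0 [HM0 [le [lin HCO]]]] M HM [phi [c [psi [b Hpat]]]].
have [Kp HKp] := HCO psi.
have [Cp hp] := choice_fun HKp.
pose Kf i := proj1_sig (constructive_indefinite_description _ (HCO (phi i))).
pose HKf i : forall s, _ := proj2_sig (constructive_indefinite_description _ (HCO (phi i))).
pose Cf i s := proj1_sig (constructive_indefinite_description _ (HKf i s)).
have hf : forall i s, (forall k, convex le (Cf i s k)) /\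
                  (forall a, defset M0 (phi i) s a <-> exists k, Cf i s k a).
  move=> i s; exact: (proj2_sig (constructive_indefinite_description _ (HKf i s))).
pose n := Kp.+1.
pose m := (Kp.+1 * Kp.+1 * (\max_(i < Kp.+1) Kf i) * (\max_(i < Kp.+1) Kf i)).+1.
pose Body := conjn L n (fun i0 => conjn L m (fun j0 => Loc L phi psi n m i0 j0)).
pose dM := dom_inhabitant L M.
have R1 : forall i0 j0, exists a' : M, pattern_at M phi psi n m c b a' i0 j0.
  move=> i0 j0.
  have [N [e [el [a Ha]]]] := Hpat i0 j0.
  pose sM := asg M dM (fun _ _ => dM) c b.
  have : sat N (fun w => e (sM w)) (fex (Xc i0 j0) (Loc L phi psi n m i0 j0)).
    exists a; apply/sat_Loc.
    rewrite /upd eqxx.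
    have -> : (fun i v => if Pc i v == Xc i0 j0 then a else e (sM (Pc i v))) = (fun i v => e (c i v)).
      apply: functional_extensionality => i; apply: functional_extensionality => v.
      by rewrite /Pc /Xc (inj_eq pickle_inj) /sM asgP.
    have -> : (fun j v => if Qc j v == Xc i0 j0 then a else e (sM (Qc j v))) = (fun j v => e (b j v)).
      apply: functional_extensionality => i; apply: functional_extensionality => v.
      by rewrite /Qc /Xc (inj_eq pickle_inj) /sM asgQ.
    split.
    + move=> i hi; split.
      * move=> ->; apply: (Ha (phi i0) (c i0)); rewrite /ict_type; tauto.
      * move=> ne; apply: (Ha (fneg (phi i)) (c i)); right; right; right; left; by exists i.
    + move=> j hj; split.
      * move=> ->; apply: (Ha psi (b j0)); rewrite /ict_type; tauto.
      * move=> ne; apply: (Ha (fneg psi) (b j)); right; right; right; right; by exists j.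
  move=> hN.
  have [a' Ha'] : exists a', sat M (upd sM (Xc i0 j0) a') (Loc L phi psi n m i0 j0).
    exact: (proj2 (el _ sM) hN).
  move/sat_Loc: Ha'; rewrite /upd eqxx => hp'.
  exists a'.
  have -> : c = (fun i v => if Pc i v == Xc i0 j0 then a' else sM (Pc i v)).
    apply: functional_extensionality => i; apply: functional_extensionality => v.
    by rewrite /Pc /Xc (inj_eq pickle_inj) /sM asgP.
  have -> : b = (fun j v => if Qc j v == Xc i0 j0 then a' else sM (Qc j v)).
    apply: functional_extensionality => i; apply: functional_extensionality => v.
    by rewrite /Qc /Xc (inj_eq pickle_inj) /sM asgQ.
  exact: hp'.
have [A0 hA0] := choice_fun (fun i0 => choice_fun (R1 i0)).
pose A i j := A0 i j.
have satM : sat M (asg M dM A c b) Body.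
  apply/sat_conjn => i0 hi0; apply/sat_conjn => j0 hj0; apply/sat_Loc.
  have -> : (fun i v => asg M dM A c b (Pc i v)) = c.
    apply: functional_extensionality => i; apply: functional_extensionality => v; exact: asgP.
  have -> : (fun i v => asg M dM A c b (Qc i v)) = b.
    apply: functional_extensionality => i; apply: functional_extensionality => v; exact: asgQ.
  rewrite asgX; exact: hA0.
have [B hB] := free_bound L Body.
pose Sent := exs L B Body.
have sentS : sentence Sent.
  move=> v /free_exs [h1 /hB h2]; by rewrite leqNgt h2 in h1.
have satMS : forall s, sat M s Sent.
  move=> s; apply/sat_exs.
  exists (fun v => if v < B then asg M dM A c b v else s v); split.
  - by move=> v hv; rewrite ltnNge hv.
  - apply/(sat_ext _ _ _ _ (asg M dM A c b)) => // v /hB ->.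
    by [].
case: (HT Sent sentS) => [H1|H2]; last first.
  by apply: (H2 M HM (fun _ => dM)); apply: satMS.
have := H1 M0 HM0 (fun _ => dom_inhabitant L M0).
move/sat_exs => [t [_ ht]].
apply: (combi L M0 le lin phi psi Kp Cp hp Kf Cf hf
          (fun i v => t (Pc i v)) (fun j v => t (Qc j v)) (fun i j => t (Xc i j))).
move=> i0 j0 hi0 hj0.
have /sat_conjn := ht => /(_ i0 hi0) /sat_conjn /(_ j0 hj0) /sat_Loc.
by [].
Qed.
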